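(* Let $p\in\mathbb N$. (i) If $\mathbf K$ is a finite field, the group $\mathrm{GL}_{p-rec}(\mathbf K)$ is residually finite. (ii) If $\mathbf K$ is an arbitrary (commutative) field, every finitely generated subgroup $\Gamma\subset\mathrm{GL}_{p-rec}(\mathbf K)$ is residually finite.
   Context: $\mathcal M_{p\times p}$ is the monoid of pairs $(U,W)$ of words of common length over $\{0,\dots,p-1\}$. For $A:\mathcal M_{p\times p}\to\mathbf K$ (values $A[U,W]$), shift maps act by $(\rho(S,T)A)[U,W]=A[US,WT]$; $\mathrm{Rec}_{p\times p}(\mathbf K)$ is the set of $A$ for which the span of $\{\rho(S,T)A\}$ is finite-dimensional. It is an algebra for $(AB)[U,W]=\sum_{V\in\{0,\dots,p-1\}^l}A[U,V]B[V,W]$ ($(U,W)$ of length $l$) with identity $\mathrm{Id}[U,W]=\delta_{U,W}$. $\mathrm{GL}_{p-rec}(\mathbf K)$ is the group of units of $\mathrm{Rec}_{p\times p}(\mathbf K)$. A group $\Gamma$ is residually finite if for every $\gamma\ne1$ there is a homomorphism $\pi$ to a finite group with $\pi(\gamma)\ne1$. *)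

(* Defs.v *)
From mathcomp Require Import all_boot all_algebra all_fingroup.
From Stdlib Require List.
Set Implicit Arguments. Unset Strict Implicit. Unset Printing Implicit Defensive.
Import GRing.Theory.
Local Open Scope ring_scope.

(* A function on the monoid M_{p x p}: for each common length n, a value
   A[U,W] for every pair of words U, W of length n over {0,...,p-1}. *)
Definition Mfun (K : Type) (p : nat) :=
  forall n : nat, n.-tuple 'I_p -> n.-tuple 'I_p -> K.

Definition shift (K : Type) (p m : nat) (S T : m.-tuple 'I_p) (A : Mfun K p)
  : Mfun K p :=
  fun n U W => A (n + m)%N (cat_tuple U S) (cat_tuple W T).

(* A is recognizable: the span of all shifts rho(S,T)A lies in the span of
   finitely many functions B_0..B_{d-1}, i.e. is finite-dimensional. *)
Definition recognizable (K : fieldType) (p : nat) (A : Mfun K p) : Prop :=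
  exists (d : nat) (B : 'I_d -> Mfun K p),
    forall (m : nat) (S T : m.-tuple 'I_p),
      exists c : 'I_d -> K,
        shift S T A = (fun n U W => \sum_(i < d) c i * B i n U W).

Definition mulM (K : fieldType) (p : nat) (A B : Mfun K p) : Mfun K p :=
  fun n U W => \sum_(V : n.-tuple 'I_p) A n U V * B n V W.

Definition idM (K : fieldType) (p : nat) : Mfun K p :=
  fun n U W => (U == W)%:R.

Definition GLrec (K : fieldType) (p : nat) (A : Mfun K p) : Prop :=
  recognizable A /\
  exists B, recognizable B /\ mulM A B = @idM K p /\ mulM B A = @idM K p.

Inductive gen_subgroup (K : fieldType) (p : nat) (gens : seq (Mfun K p))
  : Mfun K p -> Prop :=
| gen_one : gen_subgroup gens (@idM K p)
| gen_gen : forall A, List.In A gens -> gen_subgroup gens A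
| gen_mul : forall A B, gen_subgroup gens A -> gen_subgroup gens B ->
            gen_subgroup gens (mulM A B)
| gen_inv : forall A B, gen_subgroup gens A ->
            mulM A B = @idM K p -> mulM B A = @idM K p -> gen_subgroup gens B.

Definition residually_finite (X : Type) (mul : X -> X -> X) (one : X)
  (G : X -> Prop) : Prop :=
  forall g, G g -> g <> one ->
    exists (gT : finGroupType) (pi : X -> gT),
      (forall a b, G a -> G b -> pi (mul a b) = (pi a * pi b)%g) /\
      pi g != 1%g.

(* Main.v *)
Require Import Defs.
From mathcomp Require Import all_boot all_algebra all_fingroup all_field zify.
From Stdlib Require Import ClassicalEpsilon Classical FunctionalExtensionality.
From Stdlib Require List.
Set Implicit Arguments. Unset Strict Implicit. Unset Printing Implicit Defensive.
Import GRing.Theory.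
Local Open Scope ring_scope.

Lemma Fext (F : finFieldType) (P : {poly F}) : (1 < size P)%N ->
  exists (F' : finFieldType) (iota : {rmorphism F -> F'}) (t : F'),
    root (map_poly iota P) t.
Proof.
move=> sP.
have nzP : P != 0 by rewrite -size_poly_gt0 ltnW.
have [L [rs DP _]] := FinSplittingFieldFor nzP.
pose F' := FinFieldExtType L.
exists F', (in_alg L : {rmorphism F -> F'}).
case: rs DP => [|r rs] DP.
  move/eqp_size: DP; rewrite big_nil size_poly1 size_map_poly => E.
  by rewrite E in sP.
exists r; rewrite (eqp_root DP) big_cons rootM; apply/orP; left.
by rewrite root_XsubC.
Qed.

Section Alg.
Variable K : fieldType.

Definition closed (S : K -> Prop) :=
  [/\ S 0, S 1, (forall a b, S a -> S b -> S (a + b)),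
      (forall a, S a -> S (- a)) & (forall a b, S a -> S b -> S (a * b))].

Definition hom (S : K -> Prop) (F : fieldType) (phi : K -> F) :=
  [/\ phi 1 = 1, (forall a b, S a -> S b -> phi (a + b) = phi a + phi b) &
      (forall a b, S a -> S b -> phi (a * b) = phi a * phi b)].

Variable S : K -> Prop.
Hypothesis cS : closed S.

Lemma S0 : S 0. Proof. by case: cS. Qed.
Lemma S1 : S 1. Proof. by case: cS. Qed.
Lemma SD a b : S a -> S b -> S (a + b). Proof. by case: cS => _ _ H _ _; apply: H. Qed.
Lemma SN a : S a -> S (- a). Proof. by case: cS => _ _ _ H _; apply: H. Qed.
Lemma SM a b : S a -> S b -> S (a * b). Proof. by case: cS => _ _ _ _ H; apply: H. Qed.
Lemma SB a b : S a -> S b -> S (a - b). Proof. by move=> Ha Hb; apply: SD => //; apply: SN. Qed.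
Lemma SX a k : S a -> S (a ^+ k).
Proof. by move=> Ha; elim: k => [|k IH]; [rewrite expr0; exact: S1|rewrite exprS; exact: SM]. Qed.
Lemma Snat k : S k%:R.
Proof. elim: k => [|k IH]; first exact: S0. rewrite -addn1 natrD; apply: SD => //; exact: S1. Qed.
Lemma Ssum (I : Type) (r : seq I) (f : I -> K) :
  (forall i, S (f i)) -> S (\sum_(i <- r) f i).
Proof.
move=> Hf; elim: r => [|i r IH]; first by rewrite big_nil; exact: S0.
by rewrite big_cons; apply: SD.
Qed.

Variable F : fieldType.
Variable phi : K -> F.
Hypothesis hphi : hom S phi.

Lemma phi1 : phi 1 = 1. Proof. by case: hphi. Qed.
Lemma phiD a b : S a -> S b -> phi (a + b) = phi a + phi b.
Proof. by case: hphi => _ H _; apply: H. Qed.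
Lemma phiM a b : S a -> S b -> phi (a * b) = phi a * phi b.
Proof. by case: hphi => _ _ H; apply: H. Qed.
Lemma phi0 : phi 0 = 0.
Proof.
have := phiD S0 S0; rewrite addr0.
by move/(congr1 (fun z => z - phi 0)); rewrite subrr addrK => ->.
Qed.
Lemma phiN a : S a -> phi (- a) = - phi a.
Proof.
move=> Ha; have := phiD Ha (SN Ha); rewrite subrr phi0.
by move/(congr1 (fun z => z - phi a)); rewrite sub0r addrC addKr => ->.
Qed.
Lemma phiB a b : S a -> S b -> phi (a - b) = phi a - phi b.
Proof. by move=> Ha Hb; rewrite phiD ?phiN //; apply: SN. Qed.
Lemma phiX a k : S a -> phi (a ^+ k) = phi a ^+ k.
Proof.
move=> Ha; elim: k => [|k IH]; first by rewrite !expr0 phi1.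
by rewrite !exprS phiM ?IH //; apply: SX.
Qed.
Lemma phinat k : phi k%:R = k%:R.
Proof.
elim: k => [|k IH]; first by rewrite phi0.
rewrite -addn1 !natrD phiD ?IH ?phi1 //; [exact: Snat|exact: S1].
Qed.
Lemma phisum (I : Type) (r : seq I) (f : I -> K) :
  (forall i, S (f i)) -> phi (\sum_(i <- r) f i) = \sum_(i <- r) phi (f i).
Proof.
move=> Hf; elim: r => [|i r IH]; first by rewrite !big_nil phi0.
rewrite !big_cons phiD ?IH //; exact: Ssum.
Qed.

End Alg.

Section Poly.
Variable K : fieldType.
Implicit Types S : K -> Prop.

Definition pov S (h : {poly K}) := forall i, S h`_i.
Definition adj S (b : K) (z : K) := exists h, pov S h /\ h.[b] = z.
Definition mp (F : fieldType) (phi : K -> F) (h : {poly K}) : {poly F} :=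
  \poly_(i < size h) phi h`_i.

Variable S : K -> Prop.
Hypothesis cS : closed S.

Lemma pov0 : pov S 0. Proof. by move=> i; rewrite coef0; apply: S0. Qed.
Lemma povC c : S c -> pov S c%:P.
Proof. by move=> Hc i; rewrite coefC; case: eqP => _ //; apply: S0. Qed.
Lemma povX : pov S 'X.
Proof. by move=> i; rewrite coefX; case: eqP => _; [apply: S1|apply: S0]. Qed.
Lemma povD h1 h2 : pov S h1 -> pov S h2 -> pov S (h1 + h2).
Proof. by move=> H1 H2 i; rewrite coefD; apply: SD. Qed.
Lemma povN h : pov S h -> pov S (- h).
Proof. by move=> H i; rewrite coefN; apply: SN. Qed.
Lemma povB h1 h2 : pov S h1 -> pov S h2 -> pov S (h1 - h2).
Proof. by move=> H1 H2; apply: povD => //; apply: povN. Qed.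
Lemma povM h1 h2 : pov S h1 -> pov S h2 -> pov S (h1 * h2).
Proof. by move=> H1 H2 i; rewrite coefM; apply: Ssum => // j; apply: SM. Qed.
Lemma povZ c h : S c -> pov S h -> pov S (c *: h).
Proof. by move=> Hc H i; rewrite coefZ; apply: SM. Qed.
Lemma povXn k : pov S 'X^k.
Proof. by move=> i; rewrite coefXn; case: eqP => _; [apply: S1|apply: S0]. Qed.
Lemma pov_lead h : pov S h -> S (lead_coef h).
Proof. by move=> H; apply: H. Qed.

Lemma adj_closed b : closed (adj S b).
Proof.
split.
- by exists 0; split; [apply: pov0|rewrite horner0].
- by exists 1; split; [apply: povC; apply: S1|rewrite hornerC].
- move=> _ _ [h1 [H1 <-]] [h2 [H2 <-]]; exists (h1 + h2); split.
    exact: povD. by rewrite hornerD.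
- move=> _ [h1 [H1 <-]]; exists (- h1); split; first exact: povN.
  by rewrite hornerN.
- move=> _ _ [h1 [H1 <-]] [h2 [H2 <-]]; exists (h1 * h2); split.
    exact: povM. by rewrite hornerM.
Qed.

Lemma adjS b a : S a -> adj S b a.
Proof. by move=> Ha; exists a%:P; split; [apply: povC|rewrite hornerC]. Qed.
Lemma adjb b : adj S b b.
Proof. by exists 'X; split; [apply: povX|rewrite hornerX]. Qed.
Lemma adjh b h : pov S h -> adj S b h.[b].
Proof. by move=> H; exists h. Qed.

Section Mp.
Variable F : fieldType.
Variable phi : K -> F.
Hypothesis hphi : hom S phi.

Lemma coef_mp h i : (mp phi h)`_i = phi h`_i.
Proof.
rewrite coef_poly; case: ltnP => // Hi.
by rewrite nth_default // (phi0 cS hphi).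
Qed.

Lemma mpD h1 h2 : pov S h1 -> pov S h2 -> mp phi (h1 + h2) = mp phi h1 + mp phi h2.
Proof. by move=> H1 H2; apply/polyP => i; rewrite coefD !coef_mp coefD (phiD hphi). Qed.
Lemma mpN h : pov S h -> mp phi (- h) = - mp phi h.
Proof. by move=> H; apply/polyP => i; rewrite coefN !coef_mp coefN (phiN cS hphi). Qed.
Lemma mpB h1 h2 : pov S h1 -> pov S h2 -> mp phi (h1 - h2) = mp phi h1 - mp phi h2.
Proof. by move=> H1 H2; rewrite mpD ?mpN //; apply: povN. Qed.
Lemma mpC c : mp phi c%:P = (phi c)%:P.
Proof.
apply/polyP => i; rewrite coef_mp !coefC; case: eqP => _ //.
exact: (phi0 cS hphi).
Qed.
Lemma mp0 : mp phi 0 = 0.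
Proof. by rewrite -polyC0 mpC (phi0 cS hphi). Qed.
Lemma mpM h1 h2 : pov S h1 -> pov S h2 -> mp phi (h1 * h2) = mp phi h1 * mp phi h2.
Proof.
move=> H1 H2; apply/polyP => i; rewrite coef_mp !coefM (phisum cS hphi).
  by apply: eq_bigr => j _; rewrite (phiM hphi) // !coef_mp.
by move=> j; apply: SM.
Qed.
Lemma mpZ c h : S c -> pov S h -> mp phi (c *: h) = phi c *: mp phi h.
Proof. by move=> Hc H; apply/polyP => i; rewrite coefZ !coef_mp coefZ (phiM hphi). Qed.

Variable b : K.
Variable t : F.
Hypothesis KP : forall h, pov S h -> h.[b] = 0 -> (mp phi h).[t] = 0.

Definition ext (z : K) : F :=
  (mp phi (epsilon (inhabits 0) (fun h => pov S h /\ h.[b] = z))).[t].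

Lemma extE h : pov S h -> ext h.[b] = (mp phi h).[t].
Proof.
move=> H; rewrite /ext.
set r := epsilon _ _.
have [Hr Er] : pov S r /\ r.[b] = h.[b].
  by apply: (epsilon_spec (inhabits 0) (fun h' => pov S h' /\ h'.[b] = h.[b])); exists h.
have := KP (povB Hr H); rewrite hornerD hornerN Er subrr => /(_ erefl).
by rewrite mpB // hornerD hornerN => /eqP; rewrite subr_eq0 => /eqP.
Qed.

Lemma extS a : S a -> ext a = phi a.
Proof. by move=> Ha; rewrite -[a](hornerC a b) extE ?mpC ?hornerC //; apply: povC. Qed.

Lemma ext_hom : hom (adj S b) ext.
Proof.
split.
- by rewrite extS ?(phi1 hphi) //; apply: S1.
- move=> _ _ [h1 [H1 <-]] [h2 [H2 <-]].
  by rewrite -hornerD !extE ?mpD ?hornerD //; apply: povD.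
- move=> _ _ [h1 [H1 <-]] [h2 [H2 <-]].
  by rewrite -hornerM !extE ?mpM ?hornerM //; apply: povM.
Qed.

End Mp.
End Poly.

Lemma minP (P : nat -> Prop) : (exists n, P n) -> exists n, P n /\ forall m, P m -> (n <= m)%N.
Proof.
move=> [n Pn]; elim/ltn_ind: n Pn => n IH Pn.
case: (classic (exists m, (m < n)%N /\ P m)) => [[m [lt Pm]]|H].
  exact: IH m lt Pm.
exists n; split => // m Pm; rewrite leqNgt; apply/negP => lt; apply: H; exists m.
by split.
Qed.

Section PD.
Variable K : fieldType.
Variable S : K -> Prop.
Hypothesis cS : closed S.

Lemma PD f : pov S f -> f != 0 -> forall h, pov S h -> exists k q r,
  [/\ pov S q, pov S r, (size r < size f)%N & lead_coef f ^+ k *: h = q * f + r].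
Proof.
move=> Hf nzf; suff: forall n (h : {poly K}), (size h <= n)%N -> pov S h -> exists k q r,
  [/\ pov S q, pov S r, (size r < size f)%N & lead_coef f ^+ k *: h = q * f + r].
  by move=> H h; apply: H (leqnn _).
have sf0 : (0 < size f)%N by rewrite size_poly_gt0.
elim=> [|n IH] h Hs Hh.
  exists 0%N, 0, h; split => //; first exact: (pov0 cS).
    by move: Hs; rewrite leqn0 => /eqP ->.
  by rewrite expr0 scale1r mul0r add0r.
case: (ltnP (size h) (size f)) => Hlt.
  exists 0%N, 0, h; split => //; first exact: (pov0 cS).
  by rewrite expr0 scale1r mul0r add0r.
set c := lead_coef f; set m := (size h - size f)%N.
have nzc : c != 0 by rewrite lead_coef_eq0.
set h' := c *: h - lead_coef h *: ('X^m * f).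
have Hh' : pov S h'.
  apply: (povB cS); first by apply: (povZ cS) => //; apply: pov_lead.
  apply: (povZ cS); first by apply: pov_lead.
  by apply: (povM cS) => //; apply: (povXn cS).
have sh' : (size h' <= n)%N.
  apply: (@leq_trans (size h).-1); last by rewrite -ltnS prednK ?(leq_trans sf0).
  apply/leq_sizeP => i Hi; rewrite coefB !coefZ coefXnM.
  have sh : (0 < size h)%N by apply: leq_trans Hlt.
  case: (ltnP i (size h)) => Hi2.
    have Ei : i = (size h).-1 by lia.
    have -> : (i < m)%N = false by apply/negbTE; rewrite /m; lia.
    have -> : (i - m)%N = (size f).-1.
      by rewrite Ei /m; lia.
    by rewrite Ei -/(lead_coef h) mulrC subrr.
  rewrite nth_default // mulr0 sub0r.
  case: ifP => Him; first by rewrite mulr0 oppr0.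
  rewrite nth_default ?mulr0 ?oppr0 //.
  rewrite /m leq_subRL; first by rewrite subnK.
  by apply: leq_trans (leq_subr _ _) Hi2.
have [k [q [r [Hq Hr Hrs E]]]] := IH h' sh' Hh'.
exists k.+1, (q + (c ^+ k * lead_coef h) *: 'X^m), r; split => //.
  apply: (povD cS) => //; apply: (povZ cS); last exact: (povXn cS).
  by apply: (SM cS) => //; [apply: (SX cS) => //; apply: pov_lead|apply: pov_lead].
rewrite exprSr -scalerA.
have -> : c *: h = h' + lead_coef h *: ('X^m * f) by rewrite /h' subrK.
rewrite scalerDr E mulrDl -addrA [r + _]addrC addrA; congr (_ + _).
by rewrite -scalerAl scalerA.
Qed.
End PD.

Lemma coef_nz_size (R : nzRingType) (p : {poly R}) i : p`_i != 0 -> (i < size p)%N.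
Proof. by apply: contraR; rewrite -leqNgt => H; rewrite nth_default. Qed.

Section Ext.
Variable K : fieldType.
Variable S : K -> Prop.
Hypothesis cS : closed S.

Lemma hom_comp (F F' : fieldType) (psi : K -> F) (iota : {rmorphism F -> F'}) :
  hom S psi -> hom S (fun a => iota (psi a)).
Proof.
move=> hp; split.
- by rewrite (phi1 hp) rmorph1.
- by move=> a b Ha Hb; rewrite (phiD hp) // rmorphD.
- by move=> a b Ha Hb; rewrite (phiM hp) // rmorphM.
Qed.

Lemma mp_comp (F F' : fieldType) (psi : K -> F) (iota : {rmorphism F -> F'}) h :
  hom S psi -> mp (fun a => iota (psi a)) h = map_poly iota (mp psi h).
Proof.
move=> hp; apply/polyP => i.
by rewrite coef_map (coef_mp cS (hom_comp iota hp)) (coef_mp cS hp).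
Qed.

Lemma Ext b x : adj S b x -> x != 0 ->
  exists y, [/\ S y, y != 0 & forall (F : finFieldType) (psi : K -> F),
    hom S psi -> psi y != 0 ->
    exists (F' : finFieldType) (phi : K -> F'), hom (adj S b) phi /\ phi x != 0].
Proof.
move=> [g [Hg Eg]] nzx.
have nzg : g != 0 by apply: contraNneq nzx => gz; rewrite -Eg gz horner0.
case: (classic (exists f, pov S f /\ f != 0 /\ f.[b] = 0)) => [HB|HA].
  have [d [[f [Hf [nzf [fb sf]]]] Hmin']] := minP
    (P := fun n => exists f, pov S f /\ f != 0 /\ f.[b] = 0 /\ size f = n)
    (let: ex_intro f Hf := HB in ex_intro _ (size f) (ex_intro _ f (conj (proj1 Hf) (conj (proj1 (proj2 Hf)) (conj (proj2 (proj2 Hf)) erefl))))).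
  have Hmin : forall h, pov S h -> h != 0 -> h.[b] = 0 -> (size f <= size h)%N.
    by move=> h Hh nzh hb; rewrite sf; apply: Hmin'; exists h.
  clear Hmin' HB.
  have sf2 : (1 < size f)%N.
    rewrite ltnNge; apply/negP => /size1_polyC Ef.
    by move: nzf fb; rewrite Ef hornerC polyC_eq0 => /eqP H /H.
  set c := lead_coef f.
  have nzc : c != 0 by rewrite lead_coef_eq0.
  have Claim : forall n (r : {poly K}), (size r <= n)%N -> pov S r -> (size r < size f)%N ->
      r.[b] != 0 -> exists e w, [/\ S e, e != 0, adj S b w & r.[b] * w = e].
    elim=> [|n IH] r Hs Hr Hrf Hrb.
      by move: Hs Hrb; rewrite leqn0 size_poly_eq0 => /eqP ->; rewrite horner0 eqxx.
    have nzr : r != 0 by apply: contraNneq Hrb => ->; rewrite horner0.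
    case: (leqP (size r) 1) => Hr1.
      have Er := size1_polyC Hr1; set e := r`_0 in Er.
      exists e, 1; split.
      - by have := Hr 0%N; rewrite Er coefC.
      - by move: Hrb; rewrite Er hornerC.
      - by apply: adjS => //; apply: S1.
      - by rewrite Er hornerC mulr1.
    have [k [q [r2 [Hq Hr2 Hr2s E]]]] := PD cS Hr nzr Hf.
    have Eb : q.[b] * r.[b] + r2.[b] = 0.
      by rewrite -hornerM -hornerD -E hornerZ fb mulr0.
    case: (eqVneq r2.[b] 0) => r2b.
      exfalso.
      case: (eqVneq r2 0) => [r2z|nzr2]; last first.
        by have := Hmin r2 Hr2 nzr2 r2b; lia.
      move: Eb E; rewrite r2z horner0 addr0 => /eqP; rewrite mulf_eq0 (negbTE Hrb) orbF.
      move=> /eqP qb; rewrite addr0 => E.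
      have nzl : lead_coef r ^+ k != 0 by rewrite expf_neq0 // lead_coef_eq0.
      have nzq : q != 0.
        apply: contraNneq nzf => qz; move: E; rewrite qz mul0r => /eqP.
        by rewrite scaler_eq0 (negbTE nzl).
      have Es : size (lead_coef r ^+ k *: f) = size (q * r) by rewrite E.
      rewrite size_scale // size_mul // in Es.
      have := Hmin q Hq nzq qb; rewrite Es; move: Hr1; clear.
 set a := size q; set b0 := size r; lia.
    have [e [w2 [He nze Hw2 Ew2]]] : exists e w, [/\ S e, e != 0, adj S b w & r2.[b] * w = e].
      by apply: IH => //; lia.
    exists e, (- q.[b] * w2); split => //.
      apply: (SM (adj_closed cS b)) => //; apply: (SN (adj_closed cS b)).
      exact: adjh.
    rewrite -Ew2; move/eqP: Eb; rewrite addrC addr_eq0 => /eqP ->.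
    by rewrite !mulNr mulrN mulrA [r.[b] * q.[b]]mulrC.
  have [k [q [r [Hq Hr Hrs E]]]] := PD cS Hf nzf Hg.
  have rb : r.[b] = c ^+ k * x.
    by move/(congr1 (horner^~ b)): E; rewrite hornerZ hornerD hornerM fb mulr0 add0r Eg.
  have rbnz : r.[b] != 0 by rewrite rb mulf_neq0 // expf_neq0.
  have [e [w [He nze Hw Ew]]] := Claim _ r (leqnn _) Hr Hrs rbnz.
  exists (c * e); split.
  - by apply: (SM cS) => //; apply: pov_lead.
  - by rewrite mulf_neq0.
  move=> F psi hpsi Hy.
  have Sc : S c by apply: pov_lead.
  move: Hy; rewrite (phiM hpsi) // mulf_eq0 negb_or => /andP [psic psie].
  set P := mp psi f.
  have sP : (1 < size P)%N.
    have : P`_(size f).-1 != 0 by rewrite (coef_mp cS hpsi).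
    move/coef_nz_size; set a := size P; set a2 := size f in sf2 *; lia.
  have [F' [iota [t Ht]]] := @Fext _ P sP.
  pose psi' := fun a => iota (psi a).
  have hpsi' : hom S psi' := hom_comp iota hpsi.
  have mpf : (mp psi' f).[t] = 0 by rewrite mp_comp //; apply/eqP.
  have KP : forall h, pov S h -> h.[b] = 0 -> (mp psi' h).[t] = 0.
    move=> h Hh hb.
    have [k' [q' [r' [Hq' Hr' Hr's E']]]] := PD cS Hf nzf Hh.
    have r'0 : r' = 0.
      apply/eqP; apply/negP => /negP nzr'.
      have : r'.[b] = 0.
        move/(congr1 (horner^~ b)): E'; rewrite hornerZ hornerD hornerM fb hb.
        by rewrite !mulr0 add0r => <-.
      by move/(Hmin r' Hr' nzr'); lia.
    have E2 : mp psi' (c ^+ k' *: h) = mp psi' (q' * f) by rewrite E' r'0 addr0.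
    rewrite (mpZ cS hpsi') in E2; last 2 first.
      exact: (SX cS). exact: Hh.
    rewrite (mpM cS hpsi') // in E2.
    move: E2 => /(congr1 (horner^~ t)).
    rewrite hornerZ hornerM mpf mulr0 => /eqP; rewrite mulf_eq0 => /orP [|/eqP //].
    by rewrite (phiX cS hpsi') // expf_eq0 /psi' /= fmorph_eq0 (negbTE psic) andbF.
  exists F', (ext S psi' b t); split; first exact: (ext_hom cS hpsi' KP).
  have hphi := ext_hom cS hpsi' KP.
  have Ax : adj S b x by exists g.
  have Acw : adj S b (c ^+ k * w).
    apply: (SM (adj_closed cS b)) => //; apply: adjS => //; exact: (SX cS).
  have : ext S psi' b t (x * (c ^+ k * w)) = psi' e.
    by rewrite mulrA [x * _]mulrC -rb Ew (extS cS hpsi' KP).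
  rewrite (phiM hphi) // => E3; apply/eqP => H0; move: E3; rewrite H0 mul0r.
  by move/esym/eqP; rewrite /psi' fmorph_eq0 (negbTE psie).
exists (lead_coef g); split; [exact: pov_lead | by rewrite lead_coef_eq0 |].
move=> F psi hpsi Hy.
set P := mp psi g.
have Pl : P`_(size g).-1 != 0 by rewrite (coef_mp cS hpsi).
set Q := 'X * P - 1.
have sg : (0 < size g)%N by rewrite size_poly_gt0.
have sQ : (1 < size Q)%N.
  have : Q`_(size g) != 0.
    rewrite /Q coefB coefXM coef1; have -> : (size g == 0%N) = false by rewrite eqn0Ngt sg.
    by rewrite subr0.
  move/coef_nz_size; set a := size Q; set a2 := size g in sg *; lia.
have [F' [iota [t Ht]]] := @Fext _ Q sQ.
pose psi' := fun a => iota (psi a).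
have hpsi' : hom S psi' := hom_comp iota hpsi.
have KP : forall h, pov S h -> h.[b] = 0 -> (mp psi' h).[t] = 0.
  move=> h Hh hb; case: (eqVneq h 0) => [->|nzh]; first by rewrite (mp0 cS hpsi') horner0.
  by exfalso; apply: HA; exists h.
exists F', (ext S psi' b t); split; first exact: (ext_hom cS hpsi' KP).
rewrite -Eg (extE cS hpsi' KP) // mp_comp //.
move: Ht; rewrite /root /Q rmorphB rmorphM /= map_polyX rmorph1 !hornerE.
apply: contraTneq => ->; rewrite mulr0 sub0r oppr_eq0 oner_eq0 //.
Qed.
End Ext.

Lemma intr0_dvd (R : nzRingType) q (z : int) : q \in [pchar R] -> (z%:~R == 0 :> R) = (q %| `|z|)%N.
Proof.
move=> hq; case: z => n; first by rewrite /= (dvdn_pcharf hq).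
by rewrite NegzE intrN oppr_eq0 /= (dvdn_pcharf hq).
Qed.

Lemma absr (K : fieldType) (z : int) : z%:~R = 0 :> K -> `|z|%:R = 0 :> K.
Proof.
case: z => n /= z0; first exact: z0.
by move: z0; rewrite NegzE intrN => /eqP; rewrite oppr_eq0 => /eqP.
Qed.

Section AL.
Variable K : fieldType.

Definition gen0 (z : K) := exists m : int, z = m%:~R.

Lemma gen0_closed : closed gen0.
Proof.
split.
- by exists 0.
- by exists 1.
- by move=> _ _ [m ->] [m' ->]; exists (m + m'); rewrite intrD.
- by move=> _ [m ->]; exists (- m); rewrite intrN.
- by move=> _ _ [m ->] [m' ->]; exists (m * m'); rewrite intrM.
Qed.

Lemma base y : gen0 y -> y != 0 ->
  exists (F : finFieldType) (phi : K -> F), hom gen0 phi /\ phi y != 0.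
Proof.
move=> [m ->] nzy.
have [q [pq H1 H2]] : exists q, [/\ prime q,
    (forall z : int, z%:~R = 0 :> K -> (q %| `|z|)%N) & ~~ (q %| `|m|)%N].
  case: (classic (exists q, prime q /\ q%:R = 0 :> K)) => [[q [pq q0]]|H].
    have hq : q \in [pchar K] by rewrite inE pq q0 eqxx.
    exists q; split => //.
      by move=> z /eqP; rewrite (intr0_dvd _ hq).
    by rewrite -(intr0_dvd _ hq).
  have H0 : forall z : int, z%:~R = 0 :> K -> z = 0.
    move=> z z0; apply/eqP; rewrite -absz_eq0; apply/negP => nz.
    have : (`|z|%:R == 0 :> K) by apply/eqP; apply: absr.
    have zp : (0 < `|z|)%N by rewrite lt0n; apply/negP.
    move/(natf0_pchar zp) => [p].
    by rewrite inE => /andP [pp /eqP p0]; apply: H; exists p.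
  have [q lt pq] := prime_above `|m|.
  exists q; split => //.
    by move=> z /H0 ->.
  have nzm : m != 0 by apply: contraNneq nzy => ->.
  apply/negP => /dvdn_leq; rewrite lt0n absz_eq0 nzm => /(_ isT); lia.
have hq : q \in [pchar 'F_q] by apply: pchar_Fp.
pose phi := fun z : K => (epsilon (inhabits 0%Z) (fun m : int => z = m%:~R))%:~R : 'F_q.
have phiE : forall m : int, phi m%:~R = m%:~R.
  move=> m0; rewrite /phi; set e := epsilon _ _.
  have Ee : m0%:~R = e%:~R :> K.
    by apply: (epsilon_spec (inhabits 0%Z) (fun m : int => m0%:~R = m%:~R :> K)); exists m0.
  apply/eqP; rewrite -subr_eq0 -intrB (intr0_dvd _ hq); apply: H1.
  by rewrite intrB Ee subrr.
exists _, phi; split.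
  split.
  - by have := phiE 1; rewrite /= => ->.
  - by move=> _ _ [a ->] [b ->]; rewrite -intrD !phiE intrD.
  - by move=> _ _ [a ->] [b ->]; rewrite -intrM !phiE intrM.
by rewrite phiE (intr0_dvd _ hq).
Qed.

Fixpoint gen (s : seq K) : K -> Prop :=
  if s is b :: s' then adj (gen s') b else gen0.

Lemma gen_closed s : closed (gen s).
Proof. elim: s => [|b s IH] /=; [exact: gen0_closed|exact: adj_closed]. Qed.

Lemma gen_mem s b : b \in s -> gen s b.
Proof.
elim: s => [|a s IH] //=; rewrite inE => /orP [/eqP ->|/IH H].
  exact: (adjb (gen_closed s)).
by apply: adjS => //; apply: gen_closed.
Qed.

Lemma AL s y : gen s y -> y != 0 ->
  exists (F : finFieldType) (phi : K -> F), hom (gen s) phi /\ phi y != 0.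
Proof.
elim: s y => [|b s IH] y /= Hy nzy; first exact: base.
have [y0 [Hy0 nzy0 Hext]] := Ext (gen_closed s) Hy nzy.
have [F [psi [hpsi Hpsi]]] := IH y0 Hy0 nzy0.
exact: Hext hpsi Hpsi.
Qed.
End AL.

Section Grp.
Variables (K : fieldType) (p n : nat).
Local Notation T := (n.-tuple 'I_p).
Local Notation N := #|{: n.-tuple 'I_p}|.

Definition lvl (A : Mfun K p) : 'M[K]_N :=
  \matrix_(i, j) A n (enum_val i) (enum_val j).

Lemma lvlM A B : lvl (mulM A B) = lvl A *m lvl B.
Proof.
apply/matrixP => i j; rewrite !mxE /mulM.
rewrite (big_enum_val (fun V : T => A n (enum_val i) V * B n V (enum_val j))) /=.
by apply: eq_bigr => k _; rewrite !mxE.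
Qed.

Lemma lvl1 : lvl (@idM K p) = 1%:M.
Proof. by apply/matrixP => i j; rewrite !mxE /idM (inj_eq enum_val_inj). Qed.

Definition Inv (S : K -> Prop) (A : Mfun K p) :=
  (forall i j, S (lvl A i j)) /\
  exists M : 'M_N, [/\ lvl A *m M = 1%:M, M *m lvl A = 1%:M & forall i j, S (M i j)].

Variable S : K -> Prop.
Hypothesis cS : closed S.
Lemma InvM A B : Inv S A -> Inv S B -> Inv S (mulM A B).
Proof.
move=> [Ha [Ma [Ea1 Ea2 HMa]]] [Hb [Mb [Eb1 Eb2 HMb]]].
split.
  by move=> i' j'; rewrite lvlM mxE; apply: Ssum => // k; apply: SM.
exists (Mb *m Ma); split.
- by rewrite lvlM mulmxA -(mulmxA (lvl A)) Eb1 mulmx1 Ea1.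
- by rewrite lvlM mulmxA -(mulmxA Mb) Ea2 mulmx1 Eb2.
- by move=> i' j'; rewrite mxE; apply: Ssum => // k; apply: SM.
Qed.

Lemma Inv1 : Inv S (@idM K p).
Proof.
rewrite /Inv lvl1; split.
  by move=> i j; rewrite mxE; apply: Snat.
by exists 1%:M; split; rewrite ?mulmx1 // => i j; rewrite mxE; apply: Snat.
Qed.

Lemma InvV A B : Inv S A -> mulM A B = @idM K p -> mulM B A = @idM K p -> Inv S B.
Proof.
move=> [Ha [M [E1 E2 HM]]] AB BA.
have EB : lvl B = M.
  have := congr1 lvl AB; rewrite lvlM lvl1 => H.
  by rewrite -[lvl B]mul1mx -E2 -mulmxA H mulmx1.
rewrite /Inv EB; split => //; exists (lvl A); split => //.
Qed.

Variables (F : finFieldType) (phi : K -> F).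
Hypothesis hphi : hom S phi.

Lemma mmapM (M M' : 'M_N) : (forall i j, S (M i j)) -> (forall i j, S (M' i j)) ->
  map_mx phi (M *m M') = map_mx phi M *m map_mx phi M'.
Proof.
move=> H H'; apply/matrixP => i j; rewrite !mxE (phisum cS hphi).
  by apply: eq_bigr => k _; rewrite (phiM hphi) // !mxE.
by move=> k; apply: SM.
Qed.

Lemma mmap1 : map_mx phi (1%:M : 'M_N) = 1%:M.
Proof. by apply/matrixP => i j; rewrite !mxE (phinat cS hphi). Qed.

Definition pad (M : 'M[F]_N) : 'M[F]_N.+1 := lift0_mx M.

Lemma padM M M' : pad M *m pad M' = pad (M *m M').
Proof.
have := mulmx_block (1%:M : 'M[F]_1) 0 0 M 1%:M 0 0 M'.
by rewrite !mulmx0 !mul0mx !mul1mx !addr0 !add0r; apply.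
Qed.

Lemma pad1 : pad 1%:M = 1%:M.
Proof. by have := @scalar_mx_block F 1 N 1; move=> H; symmetry; apply: H. Qed.

Definition piM (A : Mfun K p) : {unit 'M[F]_N.+1} :=
  insubd (1%g : {unit 'M[F]_N.+1}) (pad (map_mx phi (lvl A))).

Lemma piM_val A : Inv S A -> val (piM A) = pad (map_mx phi (lvl A)).
Proof.
move=> [HA [M [E1 E2 HM]]]; rewrite /piM insubdK //.
have : pad (map_mx phi (lvl A)) *m pad (map_mx phi M) = 1%:M.
  by rewrite padM -mmapM // E1 mmap1 pad1.
by case/mulmx1_unit.
Qed.

Lemma grp (G : Mfun K p -> Prop) g i j :
  (forall A, G A -> Inv S A) -> G g -> phi (lvl g i j) != (i == j)%:R ->
  exists (gT : finGroupType) (pi : Mfun K p -> gT),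
    (forall a b, G a -> G b -> pi (mulM a b) = (pi a * pi b)%g) /\ pi g != 1%g.
Proof.
move=> HG Gg Hij; exists _, piM; split.
  move=> a b Ga Gb.
  have [Ha [Ma [Ea1 Ea2 HMa]]] := HG a Ga.
  have [Hb [Mb [Eb1 Eb2 HMb]]] := HG b Gb.
  have Iab : Inv S (mulM a b).
    split.
      by move=> i' j'; rewrite lvlM mxE; apply: Ssum => // k; apply: SM.
    exists (Mb *m Ma); split.
    - by rewrite lvlM mulmxA -(mulmxA (lvl a)) Eb1 mulmx1 Ea1.
    - by rewrite lvlM mulmxA -(mulmxA Mb) Ea2 mulmx1 Eb2.
    - by move=> i' j'; rewrite mxE; apply: Ssum => // k; apply: SM.
  apply: val_inj; rewrite FinRing.val_unitM (piM_val Iab) (piM_val (HG a Ga)).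
  rewrite (piM_val (HG b Gb)) lvlM mmapM //.
  by rewrite -padM mulmxE.
apply/eqP => /(congr1 val); rewrite (piM_val (HG g Gg)) => E.
have {E} E : pad (map_mx phi (lvl g)) = 1%:M by rewrite E.
move: Hij; have := congr1 (fun M : 'M[F]_N.+1 => M (rshift 1 i) (rshift 1 j)) E.
rewrite /= /pad /lift0_mx => H1.
have H2 := block_mxEdr (1%:M : 'M[F]_1) 0 0 (map_mx phi (lvl g)) i j.
have H3 : (map_mx phi (lvl g)) i j = (1%:M : 'M[F]_N.+1) (rshift 1 i) (rshift 1 j).
  by rewrite -H2; exact: H1.
rewrite mxE in H3.
by rewrite H3 mxE (eq_rshift 1 i j) eqxx.
Qed.
End Grp.

Lemma find_diff (K : fieldType) p (g : Mfun K p) : g <> @idM K p ->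
  exists n (U W : n.-tuple 'I_p), g n U W <> @idM K p n U W.
Proof.
move=> ne; apply: NNPP => H; apply: ne.
apply: functional_extensionality_dep => n.
apply: functional_extensionality => U; apply: functional_extensionality => W.
by apply: NNPP => H'; apply: H; exists n, U, W.
Qed.

Lemma lvl_rank (K : fieldType) p n (A : Mfun K p) (U W : n.-tuple 'I_p) :
  lvl n A (enum_rank U) (enum_rank W) = A n U W.
Proof. by rewrite mxE !enum_rankK. Qed.

Lemma closedT (K : fieldType) : closed (fun _ : K => True).
Proof. by []. Qed.

Lemma homT (K : finFieldType) : hom (fun _ : K => True) id.
Proof. by []. Qed.

Theorem mainTheorem13 (p : nat) :
  (forall K : finFieldType,
     residually_finite (@mulM K p) (@idM K p) (@GLrec K p)) /\
  (forall (K : fieldType) (gens : seq (Mfun K p)),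
     (forall A, List.In A gens -> GLrec A) ->
     residually_finite (@mulM K p) (@idM K p) (gen_subgroup gens)).
Proof.
split.
  move=> K g Gg ne.
  have [n [U [W HUW]]] := find_diff ne.
  apply: (@grp K p n _ (closedT K) K id (homT K) _ g (enum_rank U) (enum_rank W)) => //.
    move=> A [_ [B [_ [AB BA]]]]; split => //.
    exists (lvl n B); split => //.
      by rewrite -lvlM AB lvl1.
    by rewrite -lvlM BA lvl1.
  rewrite lvl_rank (inj_eq enum_rank_inj); apply/eqP; exact: HUW.
move=> K gens Hgens g Gg ne.
have [n [U [W HUW]]] := find_diff ne.
set N := #|{: n.-tuple 'I_p}|.
pose ents (M : 'M[K]_N) := [seq M ij.1 ij.2 | ij <- enum {: 'I_N * 'I_N}].
have ents_mem : forall (M : 'M[K]_N) (i j : 'I_N), M i j \in ents M.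
  by move=> M i j; apply/mapP; exists (i, j); rewrite ?mem_enum.
have [s Hs] : exists s : seq K, forall A, List.In A gens ->
    (forall i j, lvl n A i j \in s) /\
    exists B, [/\ mulM A B = @idM K p, mulM B A = @idM K p & forall i j, lvl n B i j \in s].
  elim: gens Hgens {Gg} => [|A0 gs IH] Hg.
    by exists [::].
  have [s' Hs'] := IH (fun A HA => Hg A (or_intror HA)).
  have [_ [B0 [_ [AB0 BA0]]]] := Hg A0 (or_introl erefl).
  exists (ents (lvl n A0) ++ ents (lvl n B0) ++ s') => A [<-|HA].
    split; first by move=> i j; rewrite mem_cat ents_mem.
    exists B0; split => // i j; rewrite !mem_cat ents_mem orbT //.
  have [H1 [B [E1 E2 H2]]] := Hs' A HA.
  split; first by move=> i j; rewrite !mem_cat H1 !orbT.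
  by exists B; split => // i j; rewrite !mem_cat H2 !orbT.
have cS := gen_closed s.
have HInv : forall A, gen_subgroup gens A -> Inv n (gen s) A.
  move=> A; elim => {A}.
  - exact: Inv1.
  - move=> A HA; have [H1 [B [E1 E2 H2]]] := Hs A HA.
    split; first by move=> i j; apply: gen_mem.
    exists (lvl n B); split.
    + by rewrite -lvlM E1 lvl1.
    + by rewrite -lvlM E2 lvl1.
    + by move=> i j; apply: gen_mem.
  - by move=> A B _ HA _ HB; apply: InvM.
  - by move=> A B _ HA E1 E2; apply: InvV HA E1 E2.
set i := enum_rank U; set j := enum_rank W.
set x := lvl n g i j - (i == j)%:R.
have Sx : gen s x.
  by apply: (SB cS); [case: (HInv g Gg) => H _; apply: H|apply: (Snat cS)].
have nzx : x != 0.
  rewrite subr_eq0 lvl_rank (inj_eq enum_rank_inj); apply/eqP; exact: HUW.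
have [F [phi [hphi Hphi]]] := AL Sx nzx.
apply: (@grp K p n _ cS F phi hphi _ g i j HInv Gg).
have : lvl n g i j = x + (i == j)%:R by rewrite subrK.
move=> ->; rewrite (phiD hphi) //; last by apply: (Snat cS).
by rewrite (phinat cS hphi) -subr_eq0 addrK.
Qed.
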